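(* Let $q>0$, $q\neq1$. For every integer $N\ge0$, the $q$-Hermite polynomial $H_N(x;q)$ satisfies, for all real $x\neq0$, $$2D_x^2H_N(x;q)-[2]_q^2\,x\frac{d}{dx}H_N(x;q)+[2]_q^2\,N\,H_N(x;q)=0 .$$
   Context: For $n\ge 0$ let $[n]_q=\frac{q^n-1}{q-1}$, $[0]_q!=1$, $[n]_q!=[1]_q\cdots[n]_q$, and $e_q(z)=\sum_{n\ge0}z^n/[n]_q!$. The $q$-derivative is $D_xf(x)=\frac{f(qx)-f(x)}{(q-1)x}$ and $D_x^2=D_x\circ D_x$. The $q$-Hermite polynomials $H_N(x;q)$ are defined by the identity of formal power series in $t$: $e^{-t^2}e_q([2]_q t x)=\sum_{N\ge0}H_N(x;q)\,t^N/[N]_q!$. *)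

(* Defs.v *)
From HB Require Import structures.
From mathcomp Require Import all_boot all_order all_algebra.
From mathcomp Require Import all_classical all_reals all_analysis.
Set Implicit Arguments. Unset Strict Implicit. Unset Printing Implicit Defensive.
Import Order.TTheory GRing.Theory Num.Theory.
Local Open Scope ring_scope.

Section QHermite.
Variable R : realType.

Definition qint (q : R) (n : nat) : R := (q ^+ n - 1) / (q - 1).

Definition qfact (q : R) (n : nat) : R := \prod_(i < n) qint q i.+1.

Definition qD (q : R) (f : R -> R) : R -> R :=
  fun x => (f (q * x) - f x) / ((q - 1) * x).

(* coefficient of t^i in the formal power series e^{-t^2} = sum_k (-1)^k t^(2k)/k! *)
Definition expm2_coef (i : nat) : R :=
  if odd i then 0 else (-1) ^+ i./2 / (i./2)`!%:R.

(* coefficient of t^j in e_q([2]_q t x) = sum_j ([2]_q x)^j t^j / [j]_q!, as a polynomial in x *)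
Definition eq_coef (q : R) (j : nat) : {poly R} :=
  (qint q 2 ^+ j / qfact q j) *: 'X^j.

(* H_N(x;q) = [N]_q! * (coefficient of t^N in e^{-t^2} e_q([2]_q t x)),
   the coefficient being the Cauchy product of the two series *)
Definition qHermite (q : R) (N : nat) : {poly R} :=
  qfact q N *: \sum_(i < N.+1) expm2_coef i *: eq_coef q (N - i).

End QHermite.

(* Main.v *)
Require Import Defs.
From HB Require Import structures.
From mathcomp Require Import all_boot all_order all_algebra.
From mathcomp Require Import all_classical all_reals all_analysis.
From mathcomp Require Import ring lra zify.
Import Order.TTheory GRing.Theory Num.Theory.
Local Open Scope ring_scope.

Section Aux.
Variable R : realType.
Variable q : R.
Hypothesis hq0 : 0 < q.
Hypothesis hq1 : q != 1.

Lemma qm1_neq0 : q - 1 != 0.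
Proof. by rewrite subr_eq0. Qed.

Lemma qint0 : qint q 0 = 0.
Proof. by rewrite /qint expr0 subrr mul0r. Qed.

Lemma qint_neq0 n : (0 < n)%N -> qint q n != 0.
Proof.
move=> n0; rewrite /qint mulf_neq0 ?invr_eq0 ?qm1_neq0 //.
by rewrite subr_eq0 pexpr_eq1 // ltW.
Qed.

Lemma qfact_neq0 n : qfact q n != 0.
Proof. by rewrite /qfact; apply/prodf_neq0 => i _; apply: qint_neq0. Qed.

Lemma qfactSS n : qfact q n.+2 = qfact q n * qint q n.+1 * qint q n.+2.
Proof. by rewrite /qfact !big_ord_recr /=. Qed.

Lemma qD_sum (M : nat) (c : nat -> R) (n : nat -> nat) y : y != 0 ->
  qD q (fun z => \sum_(i < M) c i * z ^+ (n i)) y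
  = \sum_(i < M) c i * (qint q (n i) * y ^+ (n i).-1).
Proof.
move=> hy; rewrite /qD -sumrB mulr_suml; apply: eq_bigr => i _.
have h1 := qm1_neq0.
rewrite /qint; case: (n i) => [|m] /=.
  by rewrite !expr0 !subrr !mul0r ?mulr0.
rewrite exprMn !exprS; field.
by rewrite h1 hy.
Qed.

Lemma e_rel i : 2 * expm2_coef R i + i.+2%:R * expm2_coef R i.+2 = 0.
Proof.
rewrite /expm2_coef /= negbK.
case: ifP => hodd; first by rewrite !mulr0 addr0.
have hi : i.+2%:R = 2 * (i./2).+1%:R :> R.
  rewrite -{1}(odd_double_half i) hodd add0n -mul2n -natrM; congr (_%:R).
  by rewrite mulnS.
rewrite hi factS natrM exprS.
have hf : ((i./2)`!)%:R != 0 :> R by rewrite pnatr_eq0 -lt0n fact_gt0.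
field. by rewrite hf addrC natr1 pnatr_eq0.
Qed.

End Aux.

Theorem mainTheorem6 (R : realType) (q : R) (hq0 : 0 < q) (hq1 : q != 1)
  (N : nat) (x : R) (hx : x != 0) :
  2 * qD q (qD q (fun y => (qHermite q N).[y])) x
  - qint q 2 ^+ 2 * x * ((fun y => (qHermite q N).[y])^`()%classic x)
  + qint q 2 ^+ 2 * N%:R * (qHermite q N).[x] = 0.
Proof.
set k := qint q 2.
pose c i := qfact q N * (expm2_coef R i * (k ^+ (N - i) / qfact q (N - i))).
have HE : qHermite q N = \sum_(i < N.+1) c i *: 'X^(N - i).
  rewrite /qHermite scaler_sumr; apply: eq_bigr => i _.
  by rewrite /eq_coef !scalerA /c /k !mulrA.
have Hf : (fun y => (qHermite q N).[y]) =
          (fun y => \sum_(i < N.+1) c i * y ^+ (N - i)).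
  apply/funext => y; rewrite HE horner_sum; apply: eq_bigr => i _.
  by rewrite hornerZ hornerXn.
have Hg : forall y, y != 0 -> qD q (fun y => (qHermite q N).[y]) y =
   \sum_(i < N.+1) (c i * qint q (N - i)) * y ^+ (N - i).-1.
  move=> y hy; rewrite Hf qD_sum //; apply: eq_bigr => i _; by rewrite mulrA.
have hqx : q * x != 0 by rewrite mulf_neq0 // gt_eqF.
have H2 : qD q (qD q (fun y => (qHermite q N).[y])) x =
   \sum_(i < N.+1) (c i * qint q (N - i)) *
       (qint q (N - i).-1 * x ^+ (N - i).-1.-1).
  rewrite -(@qD_sum R q hq1 N.+1 (fun i => c i * qint q (N - i)) (fun i => (N - i).-1) x hx).
  rewrite /qD in Hg *; rewrite !Hg //.
have Hd : ((fun y => (qHermite q N).[y])^`()%classic x) =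
    \sum_(i < N.+1) c i * ((N - i)%:R * x ^+ (N - i).-1).
  rewrite -derivE HE raddf_sum horner_sum; apply: eq_bigr => i _.
  by rewrite /= derivZ derivXn hornerZ hornerMn hornerXn mulr_natl.
rewrite H2 Hd (congr1 (fun f => f x) Hf) /=.
pose A i := 2 * ((c i * qint q (N - i)) * (qint q (N - i).-1 * x ^+ (N - i).-2)).
pose B i := k ^+ 2 * i%:R * c i * x ^+ (N - i).
pose B' i := if (i <= N)%N then B i else 0.
have E : 2 * \sum_(i < N.+1) c i * qint q (N - i) * (qint q (N - i).-1 * x ^+ (N - i).-2) -
  k ^+ 2 * x * (\sum_(i < N.+1) c i * ((N - i)%:R * x ^+ (N - i).-1)) +
  k ^+ 2 * N%:R * (\sum_(i < N.+1) c i * x ^+ (N - i)) =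
  \sum_(i < N.+1) A i + \sum_(i < N.+1) B i.
  rewrite !mulr_sumr -sumrB -!big_split; apply: eq_bigr => i _ /=.
  have hi : (i <= N)%N by rewrite -ltnS ltn_ord.
  have hn : (N - i)%:R * (x * x ^+ (N - i).-1) = (N - i)%:R * x ^+ (N - i) :> R.
    by case: (N - i)%N => [|n] //=; rewrite ?mul0r // exprS.
  rewrite /A /B.
  rewrite -[k ^+ 2 * x * _]mulrA [x * (c i * _)]mulrCA [x * (_ * _)]mulrCA hn natrB //.
  set p0 := x ^+ (N - i).-2. set p1 := x ^+ (N - i).-1. set p2 := x ^+ (N - i).
  ring.
rewrite E.
have SB : \sum_(i < N.+1) B i = \sum_(i < N.+1) B' i.+2.
  have H3 : \sum_(i < N.+3) B' i = \sum_(i < N.+1) B i.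
    rewrite big_ord_recr big_ord_recr /= {2 3}/B' ltnn ltnNge leqnSn /= !addr0.
    apply: eq_bigr => i _; rewrite /B' -ltnS ltn_ord //.
  rewrite -H3 !big_ord_recl /=.
  have -> : B' 0%N = 0 by rewrite /B' /= /B mulr0 !mul0r.
  have -> : B' 1%N = 0.
    rewrite /B'; case: (1 <= N)%N => //; rewrite /B /c /expm2_coef /=.
    by rewrite !(mul0r, mulr0).
  by rewrite !add0r.
rewrite SB -big_split big1 // => i _ /=.
have e := e_rel R i.
case: (leqP i.+2 N) => h.
  have [n hN] : exists n, N = (i + n.+2)%N by exists (N - i.+2)%N; lia.
  have hNi : (N - i = n.+2)%N by lia.
  have hNi2 : (N - i.+2 = n)%N by lia.
  rewrite /B' h /A /B /c hNi hNi2 /= qfactSS.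
  have h1 := @qint_neq0 _ _ hq0 hq1 _ (ltn0Sn n).
  have h2 := @qint_neq0 _ _ hq0 hq1 _ (ltn0Sn n.+1).
  have h3 := @qfact_neq0 _ _ hq0 hq1 n.
  have -> : expm2_coef R i = - (i.+2%:R * expm2_coef R i.+2) / 2.
    have -> : i.+2%:R * expm2_coef R i.+2 = - (2 * expm2_coef R i).
      by rewrite -(addKr (2 * expm2_coef R i) (i.+2%:R * expm2_coef R i.+2)) e addr0.
    by field.
  rewrite !exprS; set kn := k ^+ n; set xn := x ^+ n.
  field. by rewrite h1 h2 h3.
rewrite /B' leqNgt h /= addr0 /A.
have : (N - i <= 1)%N by lia.
case: (N - i)%N => [|[|n]] //= _; by rewrite qint0 ?mulr0 ?mul0r ?mulr0.
Qed.
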